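(* For every $(i,j)\in\mathcal I_0$ there is an integer $z$ such that $F_{ij}F_{\mathcal I_1}=q^{z}F_{\mathcal I_1}F_{ij}$ in $U_q$.
   Context: Let $m,n\ge 1$, let $q$ be an indeterminate, and let indices range over $[1,m+n]$. Put $q_i=q$ if $i\le m$ and $q_i=q^{-1}$ if $i>m$. Let $\mathcal I_0=\{(i,j):1\le i<j\le m \text{ or } m+1\le i<j\le m+n\}$, $\mathcal I_1=\{(i,j):1\le i\le m<j\le m+n\}$. The quantum supergroup $U_q=U_q(\mathfrak{gl}(m|n))$ is the associative $\mathbb C(q)$-superalgebra generated by $K_j^{\pm1}$ ($j\in[1,m+n]$) and $E_{i,i+1},F_{i,i+1}$ ($1\le i<m+n$), where $K_j^{\pm1}$ and $E_{i,i+1},F_{i,i+1}$ for $i\ne m$ are even and $E_{m,m+1},F_{m,m+1}$ are odd, subject to: $K_iK_j=K_jK_i$, $K_iK_i^{-1}=1$; $K_iE_{j,j+1}K_i^{-1}=q_i^{\delta_{ij}-\delta_{i,j+1}}E_{j,j+1}$, $K_iF_{j,j+1}K_i^{-1}=q_i^{-(\delta_{ij}-\delta_{i,j+1})}F_{j,j+1}$; $[E_{i,i+1},F_{j,j+1}]=\delta_{ij}\frac{K_iK_{i+1}^{-1}-K_i^{-1}K_{i+1}}{q_i-q_i^{-1}}$; $E_{m,m+1}^2=F_{m,m+1}^2=0$; $E_{i,i+1}E_{j,j+1}=E_{j,j+1}E_{i,i+1}$ and $F_{i,i+1}F_{j,j+1}=F_{j,j+1}F_{i,i+1}$ for $|i-j|>1$;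 for $|i-j|=1$, $i\neq m$, and $X\in\{E,F\}$: $X_{i,i+1}^2X_{j,j+1}-(q+q^{-1})X_{i,i+1}X_{j,j+1}X_{i,i+1}+X_{j,j+1}X_{i,i+1}^2=0$; and $[E_{m-1,m+2},E_{m,m+1}]=[F_{m-1,m+2},F_{m,m+1}]=0$. Here for homogeneous $x,y$, $[x,y]=xy-(-1)^{\bar x\bar y}yx$. For $i<j$ with $j>i+1$, $E_{ij}=E_{ic}E_{cj}-q_c^{-1}E_{cj}E_{ic}$ and $F_{ij}=-q_cF_{ic}F_{cj}+F_{cj}F_{ic}$ for $i<c<j$ (independent of $c$); $E_{ij},F_{ij}$ are odd iff $(i,j)\in\mathcal I_1$. Order on $\mathcal I_1$: $(i,j)\prec(s,t)$ iff $j>t$, or $j=t$ and $i<s$. $F_{\mathcal I_1}$ is the product of all $F_{ij}$, $(i,j)\in\mathcal I_1$, taken in increasing $\prec$-order. *)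

(* Defs.v *)
From HB Require Import structures.
From mathcomp Require Import all_boot all_order all_algebra all_field.
Set Implicit Arguments. Unset Strict Implicit. Unset Printing Implicit Defensive.
Import Order.TTheory GRing.Theory Num.Theory.
Local Open Scope ring_scope.

(* Base field C(q), rendered as algC(q) = fraction field of {poly algC}. *)
Definition Kf : fieldType := {fraction {poly algC}}.
Definition qq : Kf := tofrac 'X.

Definition qs (m i : nat) : Kf := if (i <= m)%N then qq else qq^-1.

(* Frd m F i d = F_{i, i+d+1}, using F_{ij} = -q_c F_{ic} F_{cj} + F_{cj} F_{ic}, c = j-1 *)
Fixpoint Frd (A : algType Kf) (m : nat) (F : nat -> A) (i d : nat) : A :=
  match d with
  | 0 => F i
  | d'.+1 => let c := (i + d').+1 in
             (- qs m c) *: (Frd m F i d' * F c) + F c * Frd m F i d'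
  end.

(* Erd m E i d = E_{i, i+d+1}, using E_{ij} = E_{ic} E_{cj} - q_c^{-1} E_{cj} E_{ic}, c = j-1 *)
Fixpoint Erd (A : algType Kf) (m : nat) (E : nat -> A) (i d : nat) : A :=
  match d with
  | 0 => E i
  | d'.+1 => let c := (i + d').+1 in
             Erd m E i d' * E c - (qs m c)^-1 *: (E c * Erd m E i d')
  end.

(* F_{ij} and E_{ij} for i < j; here E k, F k stand for E_{k,k+1}, F_{k,k+1} *)
Definition Fij (A : algType Kf) (m : nat) (F : nat -> A) (i j : nat) : A :=
  Frd m F i (j - i).-1.
Definition Eij (A : algType Kf) (m : nat) (E : nat -> A) (i j : nat) : A :=
  Erd m E i (j - i).-1.

(* F_{I_1}: product over (i,j), i in [1,m], j in [m+1,m+n], in increasing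
   order for (i,j) < (s,t) iff j > t or (j = t and i < s):
   j runs downward from m+n to m+1, and for each j, i runs upward 1..m. *)
Definition FI1 (A : algType Kf) (m n : nat) (F : nat -> A) : A :=
  \prod_(t <- rev (iota m.+1 n)) \prod_(s <- iota 1 m) Fij m F s t.

Definition dlt (i j : nat) : int := ((i == j) : nat)%:Z - ((i == j.+1) : nat)%:Z.

(* Defining relations of U_q(gl(m|n)), with super-brackets written out
   using the parities of the generators. *)
Record Uq_rel (A : algType Kf) (m n : nat) (K Kinv E F : nat -> A) : Prop := {
  rK_comm : forall i j, (1 <= i <= m + n)%N -> (1 <= j <= m + n)%N ->
      K i * K j = K j * K i;
  rK_inv : forall i, (1 <= i <= m + n)%N -> K i * Kinv i = 1 /\ Kinv i * K i = 1;
  rKE : forall i j, (1 <= i <= m + n)%N -> (1 <= j < m + n)%N ->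
      K i * E j * Kinv i = (qs m i ^ dlt i j) *: E j;
  rKF : forall i j, (1 <= i <= m + n)%N -> (1 <= j < m + n)%N ->
      K i * F j * Kinv i = (qs m i ^ (- dlt i j)) *: F j;
  rEF : forall i j, (1 <= i < m + n)%N -> (1 <= j < m + n)%N ->
      (if (i == m) && (j == m) then E i * F j + F j * E i
       else E i * F j - F j * E i)
      = (if i == j then (qs m i - (qs m i)^-1)^-1 *:
                        (K i * Kinv i.+1 - Kinv i * K i.+1)
         else 0);
  rE2 : E m * E m = 0;
  rF2 : F m * F m = 0;
  rE_far : forall i j, (1 <= i < m + n)%N -> (1 <= j < m + n)%N ->
      (j.+1 < i)%N || (i.+1 < j)%N -> E i * E j = E j * E i;
  rF_far : forall i j, (1 <= i < m + n)%N -> (1 <= j < m + n)%N ->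
      (j.+1 < i)%N || (i.+1 < j)%N -> F i * F j = F j * F i;
  rE_serre : forall i j, (1 <= i < m + n)%N -> (1 <= j < m + n)%N ->
      (j == i.+1) || (i == j.+1) -> i != m ->
      E i * E i * E j - (qq + qq^-1) *: (E i * E j * E i) + E j * E i * E i = 0;
  rF_serre : forall i j, (1 <= i < m + n)%N -> (1 <= j < m + n)%N ->
      (j == i.+1) || (i == j.+1) -> i != m ->
      F i * F i * F j - (qq + qq^-1) *: (F i * F j * F i) + F j * F i * F i = 0;
  rE_quartic : (1 < m)%N -> (1 < n)%N ->
      Eij m E m.-1 m.+2 * E m + E m * Eij m E m.-1 m.+2 = 0;
  rF_quartic : (1 < m)%N -> (1 < n)%N ->
      Fij m F m.-1 m.+2 * F m + F m * Fij m F m.-1 m.+2 = 0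
}.

(* Main.v *)
Require Import Defs.
From HB Require Import structures.
From mathcomp Require Import all_boot all_order all_algebra all_field.
From mathcomp Require Import ring zify.
Import GRing.Theory.
Local Open Scope ring_scope.

Section NC.
Variable K : fieldType.
Variable A : algType K.

Inductive tm := TA of nat | TAdd of tm & tm | TOpp of tm | TMul of tm & tm
  | TSc of K & tm | T0 | T1.

Fixpoint ev (env : seq A) (t : tm) : A :=
  match t with
  | TA i => nth 0 env i
  | TAdd x y => ev env x + ev env y
  | TOpp x => - ev env x
  | TMul x y => ev env x * ev env y
  | TSc c x => c *: ev env x
  | T0 => 0
  | T1 => 1
  end.

Fixpoint wd (env : seq A) (w : seq nat) : A :=
  match w with [::] => 1 | i :: w' => nth 0 env i * wd env w' end.

Fixpoint den (env : seq A) (l : seq (K * seq nat)) : A :=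
  match l with [::] => 0 | p :: l' => p.1 *: wd env p.2 + den env l' end.

Fixpoint wcat (w1 w2 : seq nat) : seq nat :=
  match w1 with [::] => w2 | i :: w => i :: wcat w w2 end.

Fixpoint lcat (l1 l2 : seq (K * seq nat)) :=
  match l1 with [::] => l2 | p :: l => p :: lcat l l2 end.

Fixpoint lsc (c : K) (l : seq (K * seq nat)) :=
  match l with [::] => [::] | p :: l' => (c * p.1, p.2) :: lsc c l' end.

Fixpoint lmul1 (p : K * seq nat) (l : seq (K * seq nat)) :=
  match l with [::] => [::] | p2 :: l' => (p.1 * p2.1, wcat p.2 p2.2) :: lmul1 p l' end.

Fixpoint lmul (l1 l2 : seq (K * seq nat)) :=
  match l1 with [::] => [::] | p :: l => lcat (lmul1 p l2) (lmul l l2) end.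

Fixpoint nf (t : tm) : seq (K * seq nat) :=
  match t with
  | TA i => [:: (1, [:: i])]
  | TAdd x y => lcat (nf x) (nf y)
  | TOpp x => lsc (-1) (nf x)
  | TMul x y => lmul (nf x) (nf y)
  | TSc c x => lsc c (nf x)
  | T0 => [::]
  | T1 => [:: (1, [::])]
  end.

Lemma wd_cat env w1 w2 : wd env (wcat w1 w2) = wd env w1 * wd env w2.
Proof. by elim: w1 => [|i w IH] /=; rewrite ?mul1r // IH mulrA. Qed.

Lemma den_cat env l1 l2 : den env (lcat l1 l2) = den env l1 + den env l2.
Proof. by elim: l1 => [|p l IH] /=; rewrite ?add0r // IH addrA. Qed.

Lemma den_sc env c l : den env (lsc c l) = c *: den env l.
Proof. by elim: l => [|p l IH] /=; rewrite ?scaler0 // IH scalerDr scalerA. Qed.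

Lemma den_mul1 env p l : den env (lmul1 p l) = (p.1 *: wd env p.2) * den env l.
Proof.
elim: l => [|p2 l IH] /=; first by rewrite mulr0.
rewrite IH mulrDr wd_cat; congr (_ + _).
by rewrite -scalerAl -scalerAr scalerA.
Qed.

Lemma den_mul env l1 l2 : den env (lmul l1 l2) = den env l1 * den env l2.
Proof.
elim: l1 => [|p l IH] /=; first by rewrite mul0r.
by rewrite den_cat den_mul1 IH mulrDl.
Qed.

Lemma nf_ok env t : den env (nf t) = ev env t.
Proof.
elim: t => [i|x IHx y IHy|x IHx|x IHx y IHy|c x IHx| |] /=.
- by rewrite scale1r mulr1 addr0.
- by rewrite den_cat IHx IHy.
- by rewrite den_sc IHx scaleN1r.
- by rewrite den_mul IHx IHy.
- by rewrite den_sc IHx.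
- by [].
- by rewrite scale1r addr0.
Qed.

Fixpoint weq (w1 w2 : seq nat) : bool :=
  match w1, w2 with
  | [::], [::] => true
  | i :: w1', j :: w2' => Nat.eqb i j && weq w1' w2'
  | _, _ => false
  end.

Lemma weqP {w1 w2} : weq w1 w2 -> w1 = w2.
Proof.
elim: w1 w2 => [|i w1 IH] [|j w2] //= /andP [/PeanoNat.Nat.eqb_eq -> /IH ->] //.
Qed.

Fixpoint ins (p : K * seq nat) (l : seq (K * seq nat)) :=
  match l with
  | [::] => [:: p]
  | p2 :: l' => if weq p.2 p2.2 then (p.1 + p2.1, p2.2) :: l' else p2 :: ins p l'
  end.

Fixpoint coll (l : seq (K * seq nat)) :=
  match l with [::] => [::] | p :: l' => ins p (coll l') end.

Lemma den_ins env p l : den env (ins p l) = p.1 *: wd env p.2 + den env l.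
Proof.
elim: l => [|p2 l IH] /=; first by [].
case E: (weq p.2 p2.2) => /=.
  by rewrite (weqP E) scalerDl addrA.
by rewrite IH addrCA.
Qed.

Lemma den_coll env l : den env (coll l) = den env l.
Proof. by elim: l => [|p l IH] //=; rewrite den_ins IH. Qed.

Fixpoint allz (l : seq (K * seq nat)) : Prop :=
  match l with [::] => True | p :: l' => p.1 = 0 /\ allz l' end.

Lemma den_allz env l : allz l -> den env l = 0.
Proof. by elim: l => [|p l IH] //= [-> /IH ->]; rewrite scale0r add0r. Qed.

Lemma nc_ok env t1 t2 :
  allz (coll (lcat (nf t1) (lsc (-1) (nf t2)))) -> ev env t1 = ev env t2.
Proof.
move/(den_allz env); rewrite den_coll den_cat den_sc !nf_ok scaleN1r.
by move/eqP; rewrite subr_eq0 => /eqP.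
Qed.

End NC.

Ltac nc_lookup x l :=
  match l with
  | cons x _ => constr:(0%N)
  | cons _ ?l' => let k := nc_lookup x l' in constr:(S k)
  end.

Ltac nc_reify env t :=
  lazymatch t with
  | (?x + ?y)%R => let a := nc_reify env x in let b := nc_reify env y in open_constr:(@TAdd _ a b)
  | (- ?x)%R => let a := nc_reify env x in open_constr:(@TOpp _ a)
  | (?x * ?y)%R => let a := nc_reify env x in let b := nc_reify env y in open_constr:(@TMul _ a b)
  | (?c *: ?x)%R => let a := nc_reify env x in open_constr:(@TSc _ c a)
  | 0%R => open_constr:(@T0 _)
  | 1%R => open_constr:(@T1 _)
  | _ => let k := nc_lookup t env in open_constr:(@TA _ k)
  end.

Ltac nc_unfold :=
  cbv beta iota delta [coll ins allz lcat lsc lmul lmul1 wcat nf weq Nat.eqb fst snd andb].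

Ltac nc env :=
  lazymatch goal with
  | |- @eq ?T ?l ?r =>
    let a := nc_reify env l in let b := nc_reify env r in
    change (@ev _ _ env a = @ev _ _ env b); apply: nc_ok; nc_unfold;
    repeat split
  end.


Section GA.
Local Set Implicit Arguments. Local Unset Strict Implicit.
Variable K : fieldType.
Variable A : algType K.

Definition ser (q : K) (a Y : A) := a*a*Y - (q + q^-1) *: (a*Y*a) + Y*a*a.

Ltac z0 := rewrite ?(mulr0, mul0r, scaler0, addr0, add0r, subr0, sub0r, oppr0, scale0r).

Lemma ga_comm (a u v : A) c : a*u = u*a -> a*v = v*a ->
  a * (c *: (u*v) + v*u) = (c *: (u*v) + v*u) * a.
Proof.
move=> hu hv; have d1 : a*u - u*a = 0 by rewrite hu subrr.
have d2 : a*v - v*a = 0 by rewrite hv subrr.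
apply/eqP; rewrite -subr_eq0; apply/eqP.
have -> : a * (c *: (u*v) + v*u) - (c *: (u*v) + v*u) * a =
  c *: ((a*u - u*a)*v + u*(a*v - v*a)) + (a*v - v*a)*u + v*(a*u - u*a).
  by nc [:: a; u; v]; ring.
by rewrite d1 d2; z0.
Qed.

Lemma ga_anti (a u v : A) c : a*u = u*a -> a*v = -(v*a) ->
  a * (c *: (u*v) + v*u) = - ((c *: (u*v) + v*u) * a).
Proof.
move=> hu hv; have d1 : a*u - u*a = 0 by rewrite hu subrr.
have d2 : a*v + v*a = 0 by rewrite hv addNr.
apply/eqP; rewrite -subr_eq0 opprK; apply/eqP.
have -> : a * (c *: (u*v) + v*u) + (c *: (u*v) + v*u) * a =
  c *: ((a*u - u*a)*v + u*(a*v + v*a)) + (a*v + v*a)*u - v*(a*u - u*a).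
  by nc [:: a; u; v]; ring.
by rewrite d1 d2; z0.
Qed.

Lemma ga_serR q (a x Y : A) c : a*x = x*a -> ser q a Y = 0 ->
  ser q a (c *: (Y*x) + x*Y) = 0.
Proof.
move=> hx hS; have d : x*a - a*x = 0 by rewrite hx subrr.
have -> : ser q a (c *: (Y*x) + x*Y) =
  c *: (ser q a Y * x - (q + q^-1) *: (a*Y*(x*a - a*x)) + Y*(x*a - a*x)*a + Y*a*(x*a - a*x))
  + (x * ser q a Y - ((x*a - a*x)*a + a*(x*a - a*x))*Y + (q + q^-1) *: ((x*a - a*x)*Y*a)).
  by rewrite /ser; nc [:: a; x; Y]; ring.
by rewrite d hS; z0.
Qed.

Lemma ga_serL q (a x Y : A) c : a*x = x*a -> ser q a Y = 0 ->
  ser q a (c *: (x*Y) + Y*x) = 0.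
Proof.
move=> hx hS; have d : x*a - a*x = 0 by rewrite hx subrr.
have -> : ser q a (c *: (x*Y) + Y*x) =
  (ser q a Y * x - (q + q^-1) *: (a*Y*(x*a - a*x)) + Y*(x*a - a*x)*a + Y*a*(x*a - a*x))
  + c *: (x * ser q a Y - ((x*a - a*x)*a + a*(x*a - a*x))*Y + (q + q^-1) *: ((x*a - a*x)*Y*a)).
  by rewrite /ser; nc [:: a; x; Y]; ring.
by rewrite d hS; z0.
Qed.

Lemma ga_xaxa q (a X : A) : q != 0 -> q * q + 1 != 0 -> X*X = 0 -> ser q a X = 0 ->
  X*a*X*a = a*X*a*X.
Proof.
move=> hq h2 hX hS; apply/eqP; rewrite -subr_eq0; apply/eqP.
have -> : X*a*X*a - a*X*a*X = (q + q^-1)^-1 *: (ser q a X * X - X * ser q a X - a*a*(X*X) + (X*X)*a*a).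
  by rewrite /ser; nc [:: a; X]; field; repeat (apply/andP; split); done.
by rewrite hX hS; z0.
Qed.



Lemma ga_sqR q p (a X : A) : q != 0 -> q * q + 1 != 0 -> p * p + 1 = (q + q^-1) * p ->
  X*X = 0 -> ser q a X = 0 ->
  ((- p) *: (X*a) + a*X) * ((- p) *: (X*a) + a*X) = 0.
Proof.
move=> hq h2 hp hX hS.
have e : p * p + 1 - (q + q^-1) * p = 0 by rewrite hp subrr.
have -> : ((- p) *: (X*a) + a*X) * ((- p) *: (X*a) + a*X) =
  (p * p + 1 - (q + q^-1) * p) *: (X*a*X*a)
  - p *: (X * ser q a X - (X*X)*a*a) - p *: (a*(X*X)*a)
  - (q + q^-1)^-1 *: (ser q a X * X - X * ser q a X - a*a*(X*X) + (X*X)*a*a).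
  by rewrite /ser; nc [:: a; X]; field; repeat (apply/andP; split); done.
by rewrite e hX hS; z0.
Qed.

Lemma ga_sqL q p (a X : A) : q != 0 -> q * q + 1 != 0 -> p * p + 1 = (q + q^-1) * p ->
  X*X = 0 -> ser q a X = 0 ->
  ((- p) *: (a*X) + X*a) * ((- p) *: (a*X) + X*a) = 0.
Proof.
move=> hq h2 hp hX hS.
have e : p * p + 1 - (q + q^-1) * p = 0 by rewrite hp subrr.
have -> : ((- p) *: (a*X) + X*a) * ((- p) *: (a*X) + X*a) =
  (p * p + 1 - (q + q^-1) * p) *: (X*a*X*a)
  - p *: (X * ser q a X - (X*X)*a*a) - p *: (a*(X*X)*a)
  - (p * p) *: ((q + q^-1)^-1 *: (ser q a X * X - X * ser q a X - a*a*(X*X) + (X*X)*a*a)).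
  by rewrite /ser; nc [:: a; X]; field; repeat (apply/andP; split); done.
by rewrite e hX hS; z0.
Qed.

Lemma ga_pairA q (a L : A) c : q != 0 -> q * q + 1 != 0 -> L*L = 0 -> ser q a L = 0 ->
  a * ((c *: (a*L) + L*a) * L) = ((c *: (a*L) + L*a) * L) * a.
Proof.
move=> hq h2 hL hS; apply/eqP; rewrite -subr_eq0; apply/eqP.
have -> : a * ((c *: (a*L) + L*a) * L) - ((c *: (a*L) + L*a) * L) * a =
  c *: (a*a*(L*L) - a*(L*L)*a)
  - (q + q^-1)^-1 *: (ser q a L * L - L * ser q a L - a*a*(L*L) + (L*L)*a*a).
  by rewrite /ser; nc [:: a; L]; field; repeat (apply/andP; split); done.
by rewrite hL hS; z0.
Qed.

Lemma ga_rank3 q p (a b c : A) : q != 0 -> q * q + 1 != 0 -> p * p + 1 = (q + q^-1) * p ->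
  ser q b a = 0 -> ser q b c = 0 -> a*c = c*a ->
  let Z := (- p) *: (a*b) + b*a in
  let W := (- p) *: (Z*c) + c*Z in
  b * W = W * b.
Proof.
move=> hq h2 hp S1 S2 hac Z W.
have e : p * p + 1 - (q + q^-1) * p = 0 by rewrite hp subrr.
have d : a*c - c*a = 0 by rewrite hac subrr.
apply/eqP; rewrite -subr_eq0; apply/eqP.
have -> : b * W - W * b =
  - p *: (ser q b a * c) + p *: (b*(a*c - c*a)*b) - p *: ((a*c - c*a)*b*b) + p *: (a * ser q b c)
  + (q + q^-1)^-1 *: (ser q b a * c - ser q b c * a - a * ser q b c + c * ser q b a
                      - b*b*(a*c - c*a) + (a*c - c*a)*b*b)
  + (p * p + 1 - (q + q^-1) * p) *: (b*a*b*c - a*b*c*b).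
  by rewrite /W /Z /ser; nc [:: a; b; c]; field; repeat (apply/andP; split); done.
by rewrite e d S1 S2; z0.
Qed.

Lemma ga_crec (a u v : A) c1 c2 : a*u = u*a ->
  let Rst := c1 *: (u*v) + v*u in
  c2 *: (Rst*a) + a*Rst = c1 *: (u*(c2 *: (v*a) + a*v)) + (c2 *: (v*a) + a*v)*u.
Proof.
move=> hu Rst; have d : a*u - u*a = 0 by rewrite hu subrr.
apply/eqP; rewrite -subr_eq0; apply/eqP.
have -> : c2 *: (Rst*a) + a*Rst - (c1 *: (u*(c2 *: (v*a) + a*v)) + (c2 *: (v*a) + a*v)*u)
  = c1 *: ((a*u - u*a)*v) - c2 *: (v*(a*u - u*a)).
  by rewrite /Rst; nc [:: a; u; v]; ring.
by rewrite d; z0.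
Qed.

Lemma ga_col (X U : A) c : X*X = 0 ->
  X*(c *: (U*X) + X*U) = c *: ((c *: (U*X) + X*U)*X).
Proof.
move=> hX; apply/eqP; rewrite -subr_eq0; apply/eqP.
have -> : X*(c *: (U*X) + X*U) - c *: ((c *: (U*X) + X*U)*X) = (X*X)*U - (c*c) *: (U*(X*X)).
  by nc [:: X; U]; ring.
by rewrite hX; z0.
Qed.

Lemma ga_row (a Y : A) c : Y*Y = 0 ->
  (c *: (Y*a) + a*Y)*Y = c *: (Y*(c *: (Y*a) + a*Y)).
Proof.
move=> hY; apply/eqP; rewrite -subr_eq0; apply/eqP.
have -> : (c *: (Y*a) + a*Y)*Y - c *: (Y*(c *: (Y*a) + a*Y)) = a*(Y*Y) - (c*c) *: ((Y*Y)*a).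
  by nc [:: a; Y]; ring.
by rewrite hY; z0.
Qed.

Lemma ga_qcomm q p (a Y : A) : q != 0 -> p != 0 -> p + p^-1 = q + q^-1 -> ser q a Y = 0 ->
  a * ((- p) *: (Y*a) + a*Y) = p^-1 *: (((- p) *: (Y*a) + a*Y) * a).
Proof.
move=> hq hp0 hp hS.
have e : (q + q^-1) - (p + p^-1) = 0 by rewrite hp subrr.
apply/eqP; rewrite -subr_eq0; apply/eqP.
have -> : a * ((- p) *: (Y*a) + a*Y) - p^-1 *: (((- p) *: (Y*a) + a*Y) * a) =
  ser q a Y + ((q + q^-1) - (p + p^-1)) *: (a*Y*a).
  by rewrite /ser; nc [:: a; Y]; field; repeat (apply/andP; split); done.
by rewrite e hS; z0.
Qed.

Lemma ga_cross q (U X Y : A) : q != 0 ->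
  Y*X = (- q) *: (X*Y) ->
  Y*((- q) *: (U*X) + X*U) = - (((- q) *: (U*X) + X*U)*Y) ->
  ((- q) *: (U*Y) + Y*U)*X + X*((- q) *: (U*Y) + Y*U)
    = (q^-1 - q) *: (((- q) *: (U*X) + X*U) * Y).
Proof.
move=> hq h3 h4.
have D3 : Y*X + q *: (X*Y) = 0 by rewrite h3 scaleNr addNr.
have D4 : Y*((- q) *: (U*X) + X*U) + ((- q) *: (U*X) + X*U)*Y = 0 by rewrite h4 addNr.
apply/eqP; rewrite -subr_eq0; apply/eqP.
have -> : ((- q) *: (U*Y) + Y*U)*X + X*((- q) *: (U*Y) + Y*U)
    - (q^-1 - q) *: (((- q) *: (U*X) + X*U) * Y) =
  - q^-1 *: (Y*((- q) *: (U*X) + X*U) + ((- q) *: (U*X) + X*U)*Y)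
  - q *: (U * (Y*X + q *: (X*Y))) + q^-1 *: ((Y*X + q *: (X*Y)) * U).
  by nc [:: U; X; Y]; field; repeat (apply/andP; split); done.
by rewrite D3 D4; z0.
Qed.

Lemma ga_anti2 (a u v : A) c : a*u = -(u*a) -> a*v = v*a ->
  a * (c *: (u*v) + v*u) = - ((c *: (u*v) + v*u) * a).
Proof.
move=> hu hv; have d1 : a*u + u*a = 0 by rewrite hu addNr.
have d2 : a*v - v*a = 0 by rewrite hv subrr.
apply/eqP; rewrite -subr_eq0 opprK; apply/eqP.
have -> : a * (c *: (u*v) + v*u) + (c *: (u*v) + v*u) * a =
  c *: ((a*u + u*a)*v - u*(a*v - v*a)) + (a*v - v*a)*u + v*(a*u + u*a).
  by nc [:: a; u; v]; ring.
by rewrite d1 d2; z0.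
Qed.

End GA.
Arguments ser {K A}.


Lemma qq_neq0 : qq != 0.
Proof. by rewrite /qq tofrac_eq0 polyX_eq0. Qed.

Lemma qq2_neq0 : qq * qq + 1 != 0.
Proof.
rewrite /qq -tofracM -tofrac1 -tofracD tofrac_eq0.
apply/eqP => h; have := congr1 (fun p : {poly algC} => p`_0) h.
rewrite -expr2 coefD coefXn coef1 /= add0r coef0 => /eqP; by rewrite oner_eq0.
Qed.

Lemma qs_le m c : (c <= m)%N -> qs m c = qq.
Proof. by rewrite /qs => ->. Qed.
Lemma qs_gt m c : (m < c)%N -> qs m c = qq^-1.
Proof. by move=> h; rewrite /qs leqNgt h. Qed.

Lemma pq_q : qq * qq + 1 = (qq + qq^-1) * qq.
Proof. by rewrite mulrDl mulVf ?qq_neq0. Qed.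
Lemma pq_qi : qq^-1 * qq^-1 + 1 = (qq + qq^-1) * qq^-1.
Proof. by rewrite mulrDl divff ?qq_neq0 // addrC. Qed.


Section Prod.
Variable A : algType Kf.
Lemma comm_mul (a x y : A) : a*x = x*a -> a*y = y*a -> a*(x*y) = (x*y)*a.
Proof. by move=> hx hy; rewrite mulrA hx -mulrA hy mulrA. Qed.

Lemma comm_prod (a : A) (r : seq nat) (f : nat -> A) :
  (forall i, i \in r -> a * f i = f i * a) -> a * \prod_(i <- r) f i = (\prod_(i <- r) f i) * a.
Proof.
elim: r => [|x r IH] h; first by rewrite big_nil mulr1 mul1r.
rewrite big_cons; apply: comm_mul; first by apply: h; rewrite inE eqxx.
by apply: IH => i hi; apply: h; rewrite inE hi orbT.
Qed.

Lemma sc_prodL (a : A) c (r : seq nat) (f : nat -> A) :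
  (forall i, i \in r -> a * f i = c *: (f i * a)) ->
  a * \prod_(i <- r) f i = c ^+ size r *: ((\prod_(i <- r) f i) * a).
Proof.
elim: r => [|x r IH] h; first by rewrite big_nil mulr1 mul1r expr0 scale1r.
rewrite big_cons mulrA h ?inE ?eqxx // -scalerAl -[f x * a * _]mulrA IH; last first.
  by move=> i hi; apply: h; rewrite inE hi orbT.
by rewrite -scalerAr scalerA -exprS mulrA.
Qed.

Lemma sc_prodR (b : A) c (r : seq nat) (f : nat -> A) :
  (forall i, i \in r -> f i * b = c *: (b * f i)) ->
  (\prod_(i <- r) f i) * b = c ^+ size r *: (b * \prod_(i <- r) f i).
Proof.
elim: r => [|x r IH] h; first by rewrite big_nil mulr1 mul1r expr0 scale1r.
rewrite big_cons -mulrA IH; last by move=> i hi; apply: h; rewrite inE hi orbT.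
rewrite -scalerAr [f x * (b * _)]mulrA h ?inE ?eqxx // -scalerAl scalerA -exprSr -mulrA.
by [].
Qed.
End Prod.

Section Struct.
Variables (m n : nat) (A : algType Kf) (K Kinv E F : nat -> A).
Hypothesis H : Uq_rel m n K Kinv E F.
Local Notation N := (m + n)%N.
Local Notation R := (Fij m F).

Lemma far i j : (1 <= i < N)%N -> (1 <= j < N)%N -> (j.+1 < i)%N || (i.+1 < j)%N ->
  F i * F j = F j * F i.
Proof. move=> hi hj hij; exact: (rF_far H hi hj hij). Qed.

Lemma serre i j : (1 <= i < N)%N -> (1 <= j < N)%N -> (j == i.+1) || (i == j.+1) ->
  i != m -> ser qq (F i) (F j) = 0.
Proof. move=> hi hj hij him; exact: (rF_serre H hi hj hij him). Qed.

Lemma R_gen k : R k k.+1 = F k.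
Proof. by rewrite /Fij subSnn. Qed.

Lemma R_rec s t : (s < t)%N -> R s t.+1 = (- qs m t) *: (R s t * F t) + F t * R s t.
Proof.
move=> hst; rewrite /Fij.
have -> : (t.+1 - s).-1 = ((t - s).-1).+1 by lia.
rewrite /=; have -> : (s + (t - s).-1).+1 = t by lia.
done.
Qed.

Lemma comm_far k s t : (1 <= k < N)%N -> (1 <= s)%N -> (s < t <= N)%N ->
  (t < k)%N || (k.+1 < s)%N -> F k * R s t = R s t * F k.
Proof.
move=> hk hs; elim: t => [|t IH] //= hst hc.
have [->|hlt] : s = t \/ (s < t)%N by lia.
  rewrite R_gen; apply: far => //; lia.
rewrite R_rec //; apply: ga_comm.
  by apply: IH => //; lia.
apply: far => //; lia.
Qed.

Lemma crec s c t : (1 <= s)%N -> (s < c < t)%N -> (t <= N)%N ->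
  R s t = (- qs m c) *: (R s c * R c t) + R c t * R s c.
Proof.
move=> hs; elim: t => [|t IH] hct htN; first by lia.
have [->|hlt] : c = t \/ (c < t)%N by lia.
  by rewrite R_rec ?R_gen //; lia.
rewrite R_rec; last by lia.
rewrite IH; try lia.
rewrite [R c t.+1]R_rec //.
apply: ga_crec.
apply: comm_far; lia.
Qed.

Lemma serA_aux k d : forall s, (1 <= s)%N -> k = (s + d.+1)%N -> (k < N)%N -> k != m ->
  ser qq (F k) (R s k) = 0.
Proof.
elim: d => [|d IH] s hs hk hkN hkm.
  have e : k = s.+1 by lia.
  clear hk; subst k; rewrite R_gen; apply: serre => //; lia.
rewrite (crec s s.+1 _); try lia.
rewrite R_gen; apply: ga_serL.
  apply: far; lia.
apply: IH; lia.
Qed.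

Lemma serA k s : (1 <= s)%N -> (s < k)%N -> (k < N)%N -> k != m ->
  ser qq (F k) (R s k) = 0.
Proof. move=> hs hsk; apply: (serA_aux k (k - s.+1)%N) => //; lia. Qed.

Lemma serB k t : (1 <= k)%N -> (k.+1 < t)%N -> (t <= N)%N -> k != m ->
  ser qq (F k) (R k.+1 t) = 0.
Proof.
move=> hk; elim: t => [|t IH] hkt htN hkm; first by lia.
have [->|hlt] : t = k.+1 \/ (k.+1 < t)%N by lia.
  rewrite R_gen; apply: serre => //; lia.
rewrite R_rec //; apply: ga_serR.
  apply: far; lia.
apply: IH => //; lia.
Qed.

Lemma sqm t : (1 <= m)%N -> (m < t)%N -> (t <= N)%N -> R m t * R m t = 0.
Proof.
move=> hm; elim: t => [|t IH] hmt htN; first by lia.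
have [->|hlt] : t = m \/ (m < t)%N by lia.
  by rewrite R_gen; exact: (rF2 H).
rewrite R_rec // qs_gt //.
apply: (ga_sqR qq_neq0 qq2_neq0 pq_qi).
  apply: IH => //; lia.
apply: serA => //; lia.
Qed.

Lemma sq_aux d : forall s, (1 <= s)%N -> (s + d)%N = m -> forall t, (m < t)%N -> (t <= N)%N ->
  R s t * R s t = 0.
Proof.
elim: d => [|d IH] s hs hsd t hmt htN.
  rewrite addn0 in hsd; subst s; exact: sqm.
rewrite (crec s s.+1 _); try lia.
rewrite R_gen qs_le; last by lia.
apply: (ga_sqL qq_neq0 qq2_neq0 pq_q).
  apply: (IH s.+1) => //; lia.
apply: serB => //; lia.
Qed.

Lemma sq s t : (1 <= s)%N -> (s <= m)%N -> (m < t)%N -> (t <= N)%N -> R s t * R s t = 0.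
Proof. move=> hs hsm; apply: (sq_aux (m - s)%N) => //; lia. Qed.

Lemma qs_eq k : k != m -> qs m k.+1 = qs m k.
Proof.
move=> hk; have [h|h] : (k < m)%N \/ (m < k)%N by move/eqP: hk; lia.
  by rewrite !qs_le //; lia.
by rewrite !qs_gt //; lia.
Qed.

Lemma pq_qs k : qs m k * qs m k + 1 = (qq + qq^-1) * qs m k.
Proof. by rewrite /qs; case: ifP => _; [exact: pq_q | exact: pq_qi]. Qed.

Lemma comm_base j : (1 <= j)%N -> (j.+3 <= N)%N -> j.+1 != m ->
  F j.+1 * R j j.+3 = R j j.+3 * F j.+1.
Proof.
move=> hj hjN hjm.
rewrite R_rec // R_rec // R_gen (qs_eq _ hjm).
apply: (ga_rank3 qq_neq0 qq2_neq0 (pq_qs _)).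
- apply: serre => //; lia.
- apply: serre => //; lia.
- apply: far; lia.
Qed.

Lemma comm_in1 j t : (1 <= j)%N -> (j.+3 <= t)%N -> (t <= N)%N -> j.+1 != m ->
  F j.+1 * R j t = R j t * F j.+1.
Proof.
move=> hj; elim: t => [|t IH] hjt htN hjm; first by lia.
have [e|hlt] : t = j.+2 \/ (j.+3 <= t)%N by lia.
  rewrite e; apply: comm_base => //; lia.
rewrite R_rec; last by lia.
apply: ga_comm.
  apply: IH => //; lia.
apply: far; lia.
Qed.

Lemma comm_in_aux k t d : forall s, (1 <= s)%N -> (s + d.+1)%N = k -> (k.+2 <= t)%N -> (t <= N)%N -> k != m ->
  F k * R s t = R s t * F k.
Proof.
elim: d => [|d IH] s hs hsk hkt htN hkm.
  subst k; rewrite addn1 in hkm hkt *; apply: comm_in1 => //.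
rewrite (crec s s.+1 _); try lia.
rewrite R_gen; apply: ga_comm.
  apply: far; lia.
apply: IH => //; lia.
Qed.

Lemma comm_in k s t : (1 <= s)%N -> (s < k)%N -> (k.+2 <= t)%N -> (t <= N)%N -> k != m ->
  F k * R s t = R s t * F k.
Proof. move=> hs hsk; apply: (comm_in_aux k t (k - s.+1)%N) => //; lia. Qed.

Lemma anti_base : (1 < m)%N -> (m.+2 <= N)%N ->
  F m * R m.-1 m.+2 = - (R m.-1 m.+2 * F m).
Proof.
move=> hm hN; have hn : (1 < n)%N by lia.
have := rF_quartic H hm hn.
by move/eqP; rewrite addrC addr_eq0 => /eqP.
Qed.

Lemma anti1 t : (1 < m)%N -> (m.+2 <= t)%N -> (t <= N)%N ->
  F m * R m.-1 t = - (R m.-1 t * F m).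
Proof.
move=> hm; elim: t => [|t IH] hmt htN; first by lia.
have [e|hlt] : t = m.+1 \/ (m.+2 <= t)%N by lia.
  rewrite e; apply: anti_base => //; lia.
rewrite R_rec; last by lia.
apply: ga_anti2.
  apply: IH => //; lia.
apply: far; lia.
Qed.

Lemma anti_aux t d : forall s, (1 <= s)%N -> (s + d.+1)%N = m -> (m.+2 <= t)%N -> (t <= N)%N ->
  F m * R s t = - (R s t * F m).
Proof.
elim: d => [|d IH] s hs hsm hmt htN.
  have e : s = m.-1 by lia.
  rewrite e; apply: anti1 => //; lia.
rewrite (crec s s.+1 _); try lia.
rewrite R_gen; apply: ga_anti.
  apply: far; lia.
apply: IH => //; lia.
Qed.

Lemma anti s t : (1 <= s)%N -> (s < m)%N -> (m.+2 <= t)%N -> (t <= N)%N ->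
  F m * R s t = - (R s t * F m).
Proof. move=> hs hsm; apply: (anti_aux t (m - s.+1)%N) => //; lia. Qed.

Lemma nest1 r u t : (1 <= r)%N -> (r < m)%N -> (m < t)%N -> (t < u)%N -> (u <= N)%N ->
  R r u * R m t = - (R m t * R r u).
Proof.
move=> hr hrm; elim: t => [|t IH] hmt htu huN; first by lia.
have [e|hlt] : t = m \/ (m < t)%N by lia.
  rewrite e R_gen.
  have hmu : (m.+2 <= u)%N by lia.
  by rewrite (anti r u hr hrm hmu huN) opprK.
rewrite R_rec //; apply: ga_anti2.
  apply: IH => //; lia.
apply/esym; apply: comm_in => //; lia.
Qed.

Lemma nest_aux r u t d : forall s, (1 <= r)%N -> (r < s)%N -> (s + d)%N = m -> (m < t)%N -> (t < u)%N -> (u <= N)%N ->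
  R r u * R s t = - (R s t * R r u).
Proof.
elim: d => [|d IH] s hr hrs hsm hmt htu huN.
  rewrite addn0 in hsm; subst s; apply: nest1 => //; lia.
rewrite (crec s s.+1 t); try lia.
rewrite R_gen; apply: ga_anti.
  apply/esym; apply: comm_in => //; lia.
apply: IH => //; lia.
Qed.

Lemma nest r s t u : (1 <= r)%N -> (r < s)%N -> (s <= m)%N -> (m < t)%N -> (t < u)%N -> (u <= N)%N ->
  R s t * R r u = - (R r u * R s t).
Proof.
move=> hr hrs hsm hmt htu huN.
rewrite (nest_aux r u t (m - s)%N s hr hrs) ?opprK //; lia.
Qed.

Lemma col s r t : (1 <= s)%N -> (s < r)%N -> (r <= m)%N -> (m < t)%N -> (t <= N)%N ->
  R r t * R s t = (- qq) *: (R s t * R r t).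
Proof.
move=> hs hsr hrm hmt htN.
rewrite (crec s r t); try lia.
rewrite qs_le //; apply: ga_col.
apply: sq => //; lia.
Qed.

Lemma row s k : (1 <= s)%N -> (s <= m)%N -> (m < k)%N -> (k < N)%N ->
  R s k * R s k.+1 = (- qq) *: (R s k.+1 * R s k).
Proof.
move=> hs hsm hmk hkN.
rewrite R_rec; last by lia.
rewrite qs_gt // ga_row; last by apply: sq => //; lia.
rewrite scalerA mulrNN mulfV ?qq_neq0 // scale1r //.
Qed.

Lemma cross r s k : (1 <= r)%N -> (r < s)%N -> (s <= m)%N -> (m < k)%N -> (k < N)%N ->
  R r k * R s k.+1 + R s k.+1 * R r k = (qq^-1 - qq) *: (R r k.+1 * R s k).
Proof.
move=> hr hrs hsm hmk hkN.
have h4 := nest r s k k.+1 hr hrs hsm hmk (ltnSn k) hkN.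
have h3 := row s k (ltn_trans hr hrs) hsm hmk hkN.
rewrite (crec r s k.+1) in h4 *; try lia.
rewrite (crec r s k); try lia.
rewrite qs_le // in h4 *.
apply: ga_cross qq_neq0 h3 h4.
Qed.

Lemma caseA k : (1 <= k)%N -> (k < m)%N -> F k * FI1 m n F = FI1 m n F * F k.
Proof.
move=> hk hkm; rewrite /FI1; apply: comm_prod => t; rewrite mem_rev mem_iota => /andP [ht1 ht2].
have e1 : k = (1 + k.-1)%N by lia.
have e2 : m = (k.-1 + (m - k.+1).+2)%N by lia.
have -> : iota 1 m = iota 1 k.-1 ++ k :: k.+1 :: iota k.+2 (m - k.+1).
  by rewrite {1}e2 iotaD -e1.
rewrite big_cat /= !big_cons [R k t * (_ * _)]mulrA.
apply: comm_mul.
  apply: comm_prod => s; rewrite mem_iota => /andP [hs1 hs2].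
  apply: comm_in => //; lia.
apply: comm_mul.
  rewrite (crec k k.+1 t); try lia.
  rewrite R_gen qs_le; last by lia.
  apply: (ga_pairA _ qq_neq0 qq2_neq0).
    apply: sq => //; lia.
  apply: serB => //; lia.
apply: comm_prod => s; rewrite mem_iota => /andP [hs1 hs2].
apply: comm_far => //; lia.
Qed.

Section Mid.
Variable k : nat.
Hypotheses (hmk : (m < k)%N) (hkN : (k < N)%N) (hm1 : (1 <= m)%N).
Local Notation X s := (R s k.+1).
Local Notation Y s := (R s k).
Local Notation Q := (\prod_(s <- iota 1 m) X s).

Lemma aX s : (1 <= s)%N -> (s <= m)%N -> F k * X s = qq *: (X s * F k).
Proof.
move=> hs hsm.
rewrite R_rec; last by lia.
rewrite qs_gt //.
rewrite (ga_qcomm qq_neq0 (invr_neq0 qq_neq0)) ?invrK //.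
  by rewrite addrC.
apply: serA => //; lia.
Qed.

Lemma aQ : F k * Q = qq ^+ m *: (Q * F k).
Proof.
rewrite (sc_prodL _ _ qq) ?size_iota // => s; rewrite mem_iota => /andP [h1 h2].
apply: aX => //; lia.
Qed.

Lemma QX s : (1 <= s)%N -> (s <= m)%N -> Q * X s = 0.
Proof.
move=> hs hsm.
have e1 : s = (1 + s.-1)%N by lia.
have e2 : m = (s.-1 + (m - s).+1)%N by lia.
rewrite {1}e2 iotaD -e1 /= big_cat /= big_cons /=.
rewrite -mulrA -[X s * _ * X s]mulrA (sc_prodR _ _ (- qq) (iota s.+1 (m - s))); last first.
  move=> r; rewrite mem_iota => /andP [h1 h2].
  apply: col => //; lia.
rewrite -scalerAr mulrA (sq s k.+1) //; try lia.
by rewrite mul0r scaler0 mulr0.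
Qed.

Lemma QYX p : (p <= m)%N -> forall s, (1 <= s)%N -> (s <= m)%N ->
  Q * (\prod_(r <- iota 1 p) Y r) * X s = 0.
Proof.
elim: p => [|p IH] hp s hs hsm.
  by rewrite big_nil mulr1 QX.
rewrite (_ : iota 1 p.+1 = iota 1 p ++ [:: p.+1]); last by have := iotaD 1 p 1; rewrite addn1 add1n => ->.
rewrite big_cat /= big_seq1 mulrA -mulrA.
have [hlt|[e|hgt]] : (p.+1 < s)%N \/ p.+1 = s \/ (s < p.+1)%N by lia.
- have h := cross p.+1 s k ltac:(lia) hlt hsm hmk hkN.
  have -> : Y p.+1 * X s = (qq^-1 - qq) *: (X p.+1 * Y s) - X s * Y p.+1.
    by rewrite -h addrK.
  rewrite mulrBr -scalerAr !mulrA IH // ?IH //; try lia.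
  by rewrite !mul0r scaler0 subr0.
- subst s; rewrite (row p.+1 k) //; try lia.
  by rewrite -scalerAr mulrA IH // ?mul0r ?scaler0 //; lia.
- rewrite (nest s p.+1 k k.+1) //; try lia.
  by rewrite mulrN mulrA IH // ?mul0r ?oppr0 //; lia.
Qed.

Lemma QaY p : (p <= m)%N ->
  Q * F k * (\prod_(r <- iota 1 m) Y r) =
  (qq^-1) ^+ p *: (Q * (\prod_(r <- iota 1 p) Y r) * F k * (\prod_(r <- iota p.+1 (m - p)) Y r)).
Proof.
elim: p => [|p IH] hp.
  by rewrite big_nil expr0 scale1r mulr1 subn0.
rewrite IH; last by lia.
have -> : (m - p)%N = (m - p.+1).+1 by lia.
rewrite [iota p.+1 (m - p.+1).+1]/= big_cons.
have haY : F k * Y p.+1 = X p.+1 + qq^-1 *: (Y p.+1 * F k).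
  rewrite R_rec; last by lia.
  by rewrite qs_gt // scaleNr [- _ + _]addrC addrNK.
rewrite -!mulrA [F k * (_ * _)]mulrA haY mulrDl mulrDr mulrDr.
rewrite !mulrA QYX //; try lia.
rewrite mul0r add0r -scalerAr -scalerAl scalerA -exprSr.
rewrite (_ : iota 1 p.+1 = iota 1 p ++ [:: p.+1]); last by have := iotaD 1 p 1; rewrite addn1 add1n => ->.
rewrite big_cat /= big_seq1 !mulrA.
by [].
Qed.

Lemma middle : F k * (Q * \prod_(s <- iota 1 m) Y s) = (Q * \prod_(s <- iota 1 m) Y s) * F k.
Proof.
rewrite mulrA aQ -scalerAl (QaY m (leqnn m)) subnn /= big_nil mulr1.
rewrite scalerA -exprMn mulfV ?qq_neq0 // expr1n scale1r.
by [].
Qed.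
End Mid.

Lemma caseB k : (1 <= m)%N -> (m < k)%N -> (k < N)%N -> F k * FI1 m n F = FI1 m n F * F k.
Proof.
move=> hm hmk hkN; rewrite /FI1.
have e1 : iota m.+1 n = iota m.+1 (k - m.+1) ++ k :: k.+1 :: iota k.+2 (N - k.+1).
  have e2 : n = ((k - m.+1) + (N - k.+1).+2)%N by lia.
  have e3 : k = (m.+1 + (k - m.+1))%N by lia.
  by rewrite {1}e2 iotaD -e3.
rewrite e1 rev_cat !rev_cons !cat_rcons big_cat /= !big_cons !(mulrA (\prod_(s <- iota 1 m) R s k.+1)).
apply: comm_mul.
  apply: comm_prod => t; rewrite mem_rev mem_iota => /andP [h1 h2].
  apply: comm_prod => s; rewrite mem_iota => /andP [h3 h4].
  apply: comm_in => //; try lia.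
apply: comm_mul.
  apply: middle => //.
apply: comm_prod => t; rewrite mem_rev mem_iota => /andP [h1 h2].
apply: comm_prod => s; rewrite mem_iota => /andP [h3 h4].
apply: comm_far => //; lia.
Qed.

Lemma gen_comm k : (1 <= k)%N -> (k < N)%N -> k != m -> (1 <= m)%N ->
  FI1 m n F * F k = F k * FI1 m n F.
Proof.
move=> hk hkN hkm hm.
have [h|h] : (k < m)%N \/ (m < k)%N by move/eqP: hkm; lia.
  by rewrite caseA.
by rewrite caseB.
Qed.

Lemma Rij_comm i j : (1 <= i)%N -> (i < j)%N -> (j <= N)%N -> (1 <= m)%N ->
  (forall k, (i <= k < j)%N -> k != m) ->
  FI1 m n F * R i j = R i j * FI1 m n F.
Proof.
move=> hi; elim: j => [|j IH] hij hjN hm hk; first by lia.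
have [e|hlt] : j = i \/ (i < j)%N by lia.
  subst j; rewrite R_gen; apply: gen_comm => //; try lia.
  by apply: hk; lia.
rewrite R_rec //; apply: ga_comm.
  apply: IH => //; try lia.
  by move=> k hk'; apply: hk; lia.
apply: gen_comm => //; try lia.
by apply: hk; lia.
Qed.

End Struct.

Theorem lemma5p7 (m n : nat) (hm : (1 <= m)%N) (hn : (1 <= n)%N) (i j : nat)
  (hij : [&& 1 <= i, i < j & j <= m]%N || [&& m.+1 <= i, i < j & j <= m + n]%N) :
  exists z : int, forall (A : algType Kf) (K Kinv E F : nat -> A),
    Uq_rel m n K Kinv E F ->
    Fij m F i j * FI1 m n F = (qq ^ z) *: (FI1 m n F * Fij m F i j).
Proof.
exists 0%Z => A K Kinv E F H.
rewrite expr0z scale1r (@Rij_comm m n A K Kinv E F H i j) //; try lia.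
Qed.
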